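(* Let $K$ be a field of characteristic $\neq 2$, $n\ge1$, and let $\mathcal C$ be an EACP over $K$ with natural basis $\{h_1,\dots,h_n,r\}$ and structural constants $a_{ij},b_i$. Suppose $\sum_{j=1}^n a_{ij}a_{jk}=0$ and $b_i=0$ for all $i,k=1,\dots,n$. Then $(xy)z=0$ and $x(yz)=0$ for all $x,y,z\in\mathcal C$.
   Context: An EACP over a field $K$ (characteristic $\neq 2$) is a $K$-algebra $\mathcal C$ with a basis $\{h_1,\dots,h_n,r\}$ (called a natural basis) whose multiplication is determined by bilinearity from $$h_ir=rh_i=\tfrac12\Big(\sum_{j=1}^n a_{ij}h_j+b_ir\Big),\qquad h_ih_j=0\ (i,j=1,\dots,n),\qquad rr=0,$$ for some constants $a_{ij},b_i\in K$. *)

(* Defs.v *)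
From HB Require Import structures.
From mathcomp Require Import all_boot all_order all_algebra.
Set Implicit Arguments. Unset Strict Implicit. Unset Printing Implicit Defensive.
Import Order.TTheory GRing.Theory Num.Theory.
Local Open Scope ring_scope.

(* Coordinate model of an EACP of dimension n+1 over K.
   Elements are row vectors 'rV[K]_(n.+1); the basis vector of index
   lift ord_max i (value i < n) is h_(i+1), and the basis vector of index
   ord_max is r. *)
Section EACP.
Variables (K : fieldType) (n : nat) (a : 'I_n -> 'I_n -> K) (b : 'I_n -> K).

Definition eacp_e (u : 'I_n.+1) : 'rV[K]_n.+1 := delta_mx 0 u.
Definition eacp_h (i : 'I_n) : 'rV[K]_n.+1 := eacp_e (lift ord_max i).
Definition eacp_r : 'rV[K]_n.+1 := eacp_e ord_max.

Definition eacp_hr (i : 'I_n) : 'rV[K]_n.+1 :=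
  (2%:R)^-1 *: (\sum_(j < n) a i j *: eacp_h j + b i *: eacp_r).

Definition eacp_table (u v : 'I_n.+1) : 'rV[K]_n.+1 :=
  match unlift ord_max u, unlift ord_max v with
  | Some i, None => eacp_hr i
  | None, Some i => eacp_hr i
  | _, _ => 0
  end.

Definition eacp_mul (x y : 'rV[K]_n.+1) : 'rV[K]_n.+1 :=
  \sum_(u < n.+1) \sum_(v < n.+1) (x 0 u * y 0 v) *: eacp_table u v.
End EACP.

(* Main.v *)
Require Import Defs.
From HB Require Import structures.
From mathcomp Require Import all_boot all_order all_algebra.
Import GRing.Theory.
Local Open Scope ring_scope.

Lemma sum_split (V : nmodType) n (F : 'I_n.+1 -> V) :
  \sum_(u < n.+1) F u = \sum_(i < n) F (lift ord_max i) + F ord_max.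
Proof.
rewrite big_ord_recr /=; congr (_ + _); apply: eq_bigr => i _.
by congr F; apply: val_inj; rewrite /= /bump leqNgt ltn_ord.
Qed.

Lemma swap13 (K : comRingType) (u t v : K) : u * t * v = v * t * u.
Proof. by rewrite mulrC (mulrC u) mulrA. Qed.

Section S.
Variables (K : fieldType) (n : nat) (a : 'I_n -> 'I_n -> K) (b : 'I_n -> K).
Hypothesis b0 : forall i, b i = 0.
Hypothesis aa : forall i k : 'I_n, \sum_(j < n) a i j * a j k = 0.

Definition hv (i : 'I_n) : 'rV[K]_n.+1 := \sum_(j < n) a i j *: @eacp_h K n j.

Lemma tab_hh i j : eacp_table a b (lift ord_max i) (lift ord_max j) = 0.
Proof. by rewrite /eacp_table !liftK. Qed.
Lemma tab_hr i : eacp_table a b (lift ord_max i) ord_max = 2%:R^-1 *: hv i.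
Proof. by rewrite /eacp_table liftK unlift_none /eacp_hr b0 scale0r addr0. Qed.
Lemma tab_rh i : eacp_table a b ord_max (lift ord_max i) = 2%:R^-1 *: hv i.
Proof. by rewrite /eacp_table liftK unlift_none /eacp_hr b0 scale0r addr0. Qed.
Lemma tab_rr : eacp_table a b ord_max ord_max = 0.
Proof. by rewrite /eacp_table unlift_none. Qed.

Lemma mulE x y : eacp_mul a b x y =
  \sum_(i < n) ((x 0 (lift ord_max i) * y 0 ord_max + x 0 ord_max * y 0 (lift ord_max i)) / 2%:R) *: hv i.
Proof.
rewrite /eacp_mul sum_split.
under eq_bigr => i _ do rewrite sum_split tab_hr.
have E : forall i : 'I_n, \sum_(j < n) (x 0 (lift ord_max i) * y 0 (lift ord_max j)) *: eacp_table a b (lift ord_max i) (lift ord_max j) = 0.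
  by move=> i; apply: big1 => j _; rewrite tab_hh scaler0.
under eq_bigr => i _ do rewrite E add0r.
rewrite sum_split tab_rr scaler0 addr0.
under [X in _ + X = _]eq_bigr => i _ do rewrite tab_rh.
rewrite -big_split /=; apply: eq_bigr => i _.
by rewrite !scalerA -scalerDl mulrDl.
Qed.

Lemma hv_r i : hv i 0 ord_max = 0.
Proof.
rewrite /hv summxE; apply: big1 => j _.
by rewrite !mxE /= (negbTE (neq_lift _ _)) mulr0.
Qed.

Lemma hv_h i k : hv i 0 (lift ord_max k) = a i k.
Proof.
rewrite /hv summxE (bigD1 k) //= big1 ?addr0.
  by rewrite !mxE /= eqxx mulr1.
move=> j /negbTE jk; rewrite !mxE /= (inj_eq (@lift_inj _ _)) eq_sym jk /=.
by rewrite mulr0.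
Qed.

Lemma hv_comb k : \sum_(i < n) a k i *: hv i = 0.
Proof.
rewrite /hv; under eq_bigr do rewrite scaler_sumr.
rewrite exchange_big; apply: big1 => j _ /=.
under eq_bigr do rewrite scalerA.
by rewrite -scaler_suml aa scale0r.
Qed.

Lemma key (c : 'I_n -> K) :
  \sum_(i < n) ((\sum_(k < n) c k *: hv k) 0 (lift ord_max i)) *: hv i = 0.
Proof.
under eq_bigr => i _ do rewrite summxE.
under eq_bigr => i _ do under eq_bigr => k _ do rewrite mxE hv_h.
under eq_bigr do rewrite scaler_suml.
rewrite exchange_big; apply: big1 => k _ /=.
under eq_bigr do rewrite -scalerA.
by rewrite -scaler_sumr hv_comb scaler0.
Qed.

Lemma sumhv_r (c : 'I_n -> K) : (\sum_(k < n) c k *: hv k) 0 ord_max = 0.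
Proof. by rewrite summxE big1 // => k _; rewrite mxE hv_r mulr0. Qed.

Lemma assoc0 x y z : eacp_mul a b (eacp_mul a b x y) z = 0 /\ eacp_mul a b x (eacp_mul a b y z) = 0.
Proof.
split.
  rewrite (mulE (eacp_mul a b x y)) {1 2}(mulE x y) sumhv_r.
  under eq_bigr => i _ do rewrite mul0r addr0 mulrAC -mulrA -scalerA.
  under eq_bigr do rewrite scalerA mulrC -scalerA.
  by rewrite -scaler_sumr key scaler0.
rewrite (mulE x (eacp_mul a b y z)) {1 2}(mulE y z) sumhv_r.
under eq_bigr => i _ do rewrite mulr0 add0r -mulrA -scalerA.
rewrite (eq_bigr (fun i => (x 0 ord_max / 2%:R) *: ((\sum_(k < n) ((y 0 (lift ord_max k) * z 0 ord_max +
            y 0 ord_max * z 0 (lift ord_max k)) / 2%:R) *: hv k) 0 (lift ord_max i) *: hv i))); last first.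
  by move=> i _; rewrite scalerA [RHS]scalerA mulrA mulrAC.
by rewrite -scaler_sumr key scaler0.
Qed.
End S.

Theorem mainTheorem2 (K : fieldType) (n : nat)
  (a : 'I_n -> 'I_n -> K) (b : 'I_n -> K) :
  (2%:R : K) != 0 ->
  (0 < n)%N ->
  (forall i k : 'I_n, \sum_(j < n) a i j * a j k = 0) ->
  (forall i : 'I_n, b i = 0) ->
  forall x y z : 'rV[K]_n.+1,
    eacp_mul a b (eacp_mul a b x y) z = 0 /\
    eacp_mul a b x (eacp_mul a b y z) = 0.
Proof. by move=> _ _ aa b0 x y z; apply: assoc0. Qed.
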